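(* Let $\Lambda_{({\bf A},{\bf B},{\bf c})}:\mathcal L(\mathcal H^{\otimes N'})\to\mathcal L(\mathcal H^{\otimes N})$ be a Gaussian channel. Then $\Lambda_{({\bf A},{\bf B},{\bf c})}$ is Gaussian incompatibility breaking if and only if ${\bf B}-i{\bf A}^T{\bf \Omega}{\bf A}\ge {\bf 0}$.
   Context: For $n\ge1$, $\mathcal H^{\otimes n}=L^2(\mathbb R^n)$ with canonical position and momentum operators $Q_j,P_j$, ${\bf R}=(Q_1,P_1,\ldots,Q_n,P_n)^T$, ${\bf \Omega}=\bigoplus_{j=1}^n\begin{pmatrix}0&1\\-1&0\end{pmatrix}$ (its size is determined by the phase space on which it acts), and Weyl operators $W({\bf x})=e^{-i{\bf x}^T{\bf \Omega R}}$, ${\bf x}\in\mathbb R^{2n}$. A Gaussian channel (Heisenberg picture) is a normal unital completely positive map $\Lambda:\mathcal L(\mathcal H^{\otimes N'})\to\mathcal L(\mathcal H^{\otimes N})$ with $\Lambda(W({\bf x}))=W({\bf Ax})e^{-\frac14{\bf x}^T{\bf Bx}-i{\bf c}^T{\bf x}}$ for ${\bf x}\in\mathbb R^{2N'}$, where ${\bf A}$ is a real $2N\times 2N'$ matrix, ${\bf B}$ a real $2N'\times 2N'$ matrix, ${\bf c}\in\mathbb R^{2N'}$, subject to ${\bf B}+i{\bf \Omega}-i{\bf A}^T{\bf \Omega A}\ge{\bf 0}$; it is denoted $\Lambda_{({\bf A},{\bf B},{\bf c})}$. An observable is a POVM $\mathsf{E}:\mathcal B(\mathbb R^M)\to\mathcal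 L(\mathcal H^{\otimes n})$; it is Gaussian if $\int e^{i{\bf p}^T{\bf x}}\,d\mathsf{E}({\bf x})=W({\bf Kp})e^{-\frac14{\bf p}^T{\bf Lp}-i{\bf m}^T{\bf p}}$ with ${\bf K}$ real $2n\times M$, ${\bf L}$ real $M\times M$ satisfying ${\bf L}-i{\bf K}^T{\bf \Omega K}\ge0$, ${\bf m}\in\mathbb R^M$ (every such triple determines a Gaussian observable). A channel transforms an observable $\mathsf{E}$ on $\mathcal H^{\otimes N'}$ into $\Lambda(\mathsf{E}):X\mapsto\Lambda(\mathsf{E}(X))$; for a Gaussian $\mathsf{E}$ with parameters $({\bf K},{\bf L},{\bf m})$, $\Lambda_{({\bf A},{\bf B},{\bf c})}(\mathsf{E})$ is Gaussian with parameters $({\bf AK},{\bf L}+{\bf K}^T{\bf BK},{\bf m}+{\bf K}^T{\bf c})$. A Gaussian postprocessing is a Markov kernel $f:\mathcal B(\mathbb R^{M'})\times\mathbb R^M\to[0,1]$ such that $\int e^{i{\bf p}^T{\bf y}}f(d{\bf y},{\bf x})=e^{i({\bf A}'{\bf p})^T{\bf x}}e^{-\frac14{\bf p}^T{\bf B}'{\bf p}-i{\bf c}'^T{\bf p}}$ for some real $M\times M'$ matrix ${\bf A}'$, real positive semidefinite ${\bf B}'$ and vector ${\bf c}'$; $\mathsf{E}$ is obtained from $\mathsf{G}$ via $f$ if $\mathsf{E}(X)=\int f(X,{\bf x})\,d\mathsf{G}({\bf x})$ (for $\mathsf{G}$ Gaussian with parameters $({\bf K},{\bf L},{\bf m})$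 this yields parameters $({\bf KA}',{\bf B}'+{\bf A}'^T{\bf LA}',{\bf c}'+{\bf A}'^T{\bf m})$). A collection of Gaussian observables is Gaussian compatible if there is a Gaussian observable $\mathsf{G}$ from which each member is obtained via some Gaussian postprocessing. A Gaussian channel $\Lambda$ is Gaussian incompatibility breaking if the set $\{\Lambda(\mathsf{E}):\mathsf{E}$ a Gaussian observable on $\mathcal H^{\otimes N'}\}$ is Gaussian compatible. *)

(* Defs.v *)
From HB Require Import structures.
From mathcomp Require Import all_boot all_order all_algebra.
From mathcomp Require Import complex.
From mathcomp Require Import reals.
Set Implicit Arguments. Unset Strict Implicit. Unset Printing Implicit Defensive.
Import Order.TTheory GRing.Theory Num.Theory.
Local Open Scope ring_scope.

Section GaussDefs.
Variable R : realType.

Definition rC (x : R) : R[i] := Complex x 0.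
Definition iC : R[i] := Complex 0 1.
Definition cmx m n (A : 'M[R]_(m, n)) : 'M[R[i]]_(m, n) := map_mx rC A.

(* complex positive semidefiniteness: v^* M v >= 0 for all complex v
   (in a numClosedField, 0 <= z means z is real and nonnegative) *)
Definition psdC n (M : 'M[R[i]]_n) : Prop :=
  forall v : 'cV[R[i]]_n,
    0 <= ((map_mx (fun z => z^*) v)^T *m M *m v) ord0 ord0.

(* the symplectic form Omega = (+)_{j=1}^n [[0,1],[-1,0]] on R^{2n}
   (coordinates ordered Q_1,P_1,...,Q_n,P_n) *)
Definition Omega (n : nat) : 'M[R]_(2 * n) :=
  \matrix_(i, j)
    (if ~~ odd i && (j == i.+1 :> nat) then 1
     else if odd i && (j.+1 == i :> nat) then -1 else 0).

(* Gaussian channel Lambda_(A,B,c) : L(H^{N'}) -> L(H^{N}) : admissibility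
   B + i Omega - i A^T Omega A >= 0 *)
Definition gaussian_channel (N N' : nat) (A : 'M[R]_(2 * N, 2 * N'))
    (B : 'M[R]_(2 * N')) (c : 'cV[R]_(2 * N')) : Prop :=
  psdC (cmx B + iC *: cmx (Omega N') - iC *: cmx (A^T *m Omega N *m A)).

(* parameters (K,L,m) of a Gaussian observable on H^{n} with outcome space
   R^M: L - i K^T Omega K >= 0 (every such triple determines a unique
   Gaussian observable) *)
Definition gaussian_obs (n M : nat) (K : 'M[R]_(2 * n, M)) (L : 'M[R]_M)
    (m : 'cV[R]_M) : Prop :=
  psdC (cmx L - iC *: cmx (K^T *m Omega n *m K)).

(* parameters of the image Lambda_(A,B,c)(E) of the Gaussian observable E
   with parameters (K,L,m) *)
Definition chan_K N N' M (A : 'M[R]_(2 * N, 2 * N')) (K : 'M[R]_(2 * N', M))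
  : 'M[R]_(2 * N, M) := A *m K.
Definition chan_L N' M (B : 'M[R]_(2 * N')) (K : 'M[R]_(2 * N', M))
    (L : 'M[R]_M) : 'M[R]_M := L + K^T *m B *m K.
Definition chan_m N' M (c : 'cV[R]_(2 * N')) (K : 'M[R]_(2 * N', M))
    (m : 'cV[R]_M) : 'cV[R]_M := m + K^T *m c.

(* E with parameters (K,L,m) (outcomes R^M') is obtained from G with
   parameters (K0,L0,m0) (outcomes R^M) via a Gaussian postprocessing
   (A',B',c'), A' real M x M', B' real positive semidefinite *)
Definition gauss_postprocessed n M M' (K0 : 'M[R]_(2 * n, M)) (L0 : 'M[R]_M)
    (m0 : 'cV[R]_M) (K : 'M[R]_(2 * n, M')) (L : 'M[R]_M') (m : 'cV[R]_M')
    : Prop :=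
  exists (A' : 'M[R]_(M, M')) (B' : 'M[R]_M') (c' : 'cV[R]_M'),
    psdC (cmx B') /\
    K = K0 *m A' /\ L = B' + A'^T *m L0 *m A' /\ m = c' + A'^T *m m0.

(* Lambda_(A,B,c) is Gaussian incompatibility breaking: the set of all
   Lambda(E), E a Gaussian observable on H^{N'} (any outcome dimension),
   is Gaussian compatible, i.e. there is one Gaussian observable G on H^{N}
   from which each of them is obtained by a Gaussian postprocessing. *)
Definition gauss_incompat_breaking (N N' : nat) (A : 'M[R]_(2 * N, 2 * N'))
    (B : 'M[R]_(2 * N')) (c : 'cV[R]_(2 * N')) : Prop :=
  exists (M0 : nat) (K0 : 'M[R]_(2 * N, M0)) (L0 : 'M[R]_M0) (m0 : 'cV[R]_M0),
    gaussian_obs K0 L0 m0 /\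
    forall (M : nat) (K : 'M[R]_(2 * N', M)) (L : 'M[R]_M) (m : 'cV[R]_M),
      gaussian_obs K L m ->
      gauss_postprocessed K0 L0 m0
        (chan_K A K) (chan_L B K L) (chan_m c K m).

End GaussDefs.

(* Main.v *)
Require Import Defs.
From HB Require Import structures.
From mathcomp Require Import all_boot all_order all_algebra.
From mathcomp Require Import complex.
From mathcomp Require Import reals.
From mathcomp Require Import ring lra.
Import Order.TTheory GRing.Theory Num.Theory.
Set Implicit Arguments. Unset Strict Implicit. Unset Printing Implicit Defensive.
Local Open Scope ring_scope.
Section S.
Variable R : realType.

Definition form n (P : 'M[R]_n) (x y : 'cV[R]_n) : R := (x^T *m P *m y) ord0 ord0.
Definition cv n (x y : 'cV[R]_n) : 'cV[R[i]]_n := \col_i Complex (x i ord0) (y i ord0).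

Lemma form_sum n (P : 'M[R]_n) x y :
  form P x y = \sum_j \sum_i x i ord0 * P i j * y j ord0.
Proof.
rewrite /form mxE; apply: eq_bigr => j _; rewrite mxE mulr_suml.
by apply: eq_bigr => i _; rewrite mxE.
Qed.

Lemma sumC (I : Type) (r : seq I) (f g : I -> R) :
  \sum_(i <- r) Complex (f i) (g i) = Complex (\sum_(i <- r) f i) (\sum_(i <- r) g i).
Proof. by elim: r => [|a r IH]; rewrite ?big_nil ?big_cons // IH. Qed.

Lemma qf_cv n (M : 'M[R[i]]_n) (P Q : 'M[R]_n)
  (hM : forall i j, M i j = Complex (P i j) (Q i j)) x y :
  ((map_mx (fun z => z^*) (cv x y))^T *m M *m cv x y) ord0 ord0 =
  Complex (form P x x + form P y y - form Q x y + form Q y x)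
          (form P x y - form P y x + form Q x x + form Q y y).
Proof.
rewrite mxE.
transitivity (\sum_j \sum_i Complex
   (x i ord0 * P i j * x j ord0 + y i ord0 * P i j * y j ord0
    - x i ord0 * Q i j * y j ord0 + y i ord0 * Q i j * x j ord0)
   (x i ord0 * P i j * y j ord0 - y i ord0 * P i j * x j ord0
    + x i ord0 * Q i j * x j ord0 + y i ord0 * Q i j * y j ord0)).
  apply: eq_bigr => j _; rewrite mxE mulr_suml; apply: eq_bigr => i _.
  rewrite !mxE hM /=; apply/eqP; rewrite eq_complex /=; apply/andP; split; apply/eqP; ring.
under eq_bigr do rewrite sumC.
rewrite sumC !form_sum.
congr Complex.
  by rewrite -!sumrN -!big_split /=; apply: eq_bigr => j _; rewrite -!sumrN -!big_split.
by rewrite -!sumrN -!big_split /=; apply: eq_bigr => j _; rewrite -!sumrN -!big_split.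
Qed.


Lemma le0C (a b : R) : (0 <= Complex a b) = (b == 0) && (0 <= a).
Proof. by []. Qed.

Lemma psdC_char n (M : 'M[R[i]]_n) (P Q : 'M[R]_n)
  (hM : forall i j, M i j = Complex (P i j) (Q i j)) :
  psdC M <-> forall x y,
    0 <= form P x x + form P y y - form Q x y + form Q y x /\
    form P x y - form P y x + form Q x x + form Q y y = 0.
Proof.
split.
  move=> h x y; have := h (cv x y); rewrite (qf_cv hM).
  by rewrite le0C => /andP[/eqP -> ->].
move=> h v.
have -> : v = cv (map_mx (fun z : R[i] => complex.Re z) v) (map_mx (fun z : R[i] => complex.Im z) v).
  by apply/matrixP => i j; rewrite !mxE !ord1; case: (v i ord0).
rewrite (qf_cv hM); have [h1 h2] := h (map_mx (fun z : R[i] => complex.Re z) v) (map_mx (fun z : R[i] => complex.Im z) v).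
by rewrite le0C h2 eqxx h1.
Qed.


Lemma E1 n (P S : 'M[R]_n) i j :
  (cmx P - iC R *: cmx S) i j = Complex (P i j) ((- S) i j).
Proof. rewrite !mxE /=; apply/eqP; rewrite eq_complex /=; apply/andP; split; apply/eqP; ring. Qed.

Lemma E2 n (P O S : 'M[R]_n) i j :
  (cmx P + iC R *: cmx O - iC R *: cmx S) i j = Complex (P i j) ((O - S) i j).
Proof. rewrite !mxE /=; apply/eqP; rewrite eq_complex /=; apply/andP; split; apply/eqP; ring. Qed.

Lemma E3 n (P : 'M[R]_n) i j : (cmx P) i j = Complex (P i j) ((0 : 'M[R]_n) i j).
Proof. by rewrite !mxE. Qed.

Lemma formN n (S : 'M[R]_n) x y : form (- S) x y = - form S x y.
Proof. by rewrite /form mulmxN mulNmx mxE. Qed.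

Lemma form_conj n m (K : 'M[R]_(n, m)) (P : 'M[R]_n) u w :
  form (K^T *m P *m K) u w = form P (K *m u) (K *m w).
Proof. by rewrite /form trmx_mul !mulmxA. Qed.

Lemma form_anti n (P : 'M[R]_n) x : P^T = - P -> form P x x = 0.
Proof.
move=> hP; have : form P x x = - form P x x.
  rewrite -formN -hP /form.
  have H (M : 'M[R]_1) : M ord0 ord0 = M^T ord0 ord0 by rewrite mxE.
  rewrite [LHS]H.
  by rewrite !trmx_mul trmxK mulmxA.
lra.
Qed.

Lemma Omega_anti n : (Omega R n)^T = - Omega R n.
Proof.
apply/matrixP => i j; rewrite !mxE.
move: (nat_of_ord i) (nat_of_ord j) => a b.
have [->|h1] := eqVneq b a.+1.
  rewrite !andbT (_ : (a == a.+2) = false); last by elim: a.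
  rewrite (_ : (a.+2 == a) = false); last by elim: a.
  rewrite !andbF /=; case: (odd a) => /=; rewrite ?oppr0 ?opprK //.
have [->|h2] := eqVneq a b.+1.
  rewrite !andbT !andbF /=; case: (odd b) => /=; rewrite ?oppr0 ?opprK //.
by rewrite !andbF /= oppr0.
Qed.


Lemma form0m n (x y : 'cV[R]_n) : form 0 x y = 0.
Proof. by rewrite /form mulmx0 mul0mx mxE. Qed.
Lemma form0l n (P : 'M[R]_n) y : form P 0 y = 0.
Proof. by rewrite /form trmx0 !mul0mx mxE. Qed.
Lemma form0r n (P : 'M[R]_n) x : form P x 0 = 0.
Proof. by rewrite /form mulmx0 mxE. Qed.
Lemma formNl n (P : 'M[R]_n) x y : form P (- x) y = - form P x y.
Proof. by rewrite /form linearN /= !mulNmx mxE. Qed.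
Lemma formNr n (P : 'M[R]_n) x y : form P x (- y) = - form P x y.
Proof. by rewrite /form mulmxN mxE. Qed.
Lemma addE m n (M1 M2 : 'M[R]_(m, n)) i j : (M1 + M2) i j = M1 i j + M2 i j.
Proof. by rewrite mxE. Qed.
Lemma form11 (b : 'M[R]_1) : form b (const_mx 1) (const_mx 1) = b ord0 ord0.
Proof. by rewrite form_sum !big_ord1 !mxE mul1r mulr1. Qed.

End S.

Unset Implicit Arguments.
Theorem proposition2 (R : realType) (N N' : nat)
    (A : 'M[R]_(2 * N, 2 * N')) (B : 'M[R]_(2 * N')) (c : 'cV[R]_(2 * N')) :
  gaussian_channel A B c ->
  (gauss_incompat_breaking A B c <->
   psdC (cmx B - iC R *: cmx (A^T *m Omega R N *m A))).
Proof.
move=> hch.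
have hch' := (psdC_char (E2 B (Omega R N') (A^T *m Omega R N *m A))).1 hch.
have hO n (z : 'cV[R]_(2 * n)) : form (Omega R n) z z = 0 by apply: form_anti; apply: Omega_anti.
split.
  case=> M0 [K0 [L0 [m0 [hG hall]]]].
  have hG' := (psdC_char (E1 L0 (K0^T *m Omega R N *m K0))).1 hG.
  have key (x : 'cV[R]_(2 * N')) : exists a : 'cV[R]_M0,
      A *m x = K0 *m a /\ form L0 a a <= form B x x.
    have hobs : gaussian_obs x (0 : 'M[R]_1) (0 : 'cV[R]_1).
      apply/(psdC_char (E1 0 (x^T *m Omega R N' *m x))) => u w.
      have -> : x^T *m Omega R N' *m x = 0.
        apply/matrixP => i j; rewrite (ord1 i) (ord1 j).
        by have := hO _ x; rewrite /form => ->; rewrite mxE.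
      by rewrite oppr0 !form0m; split; lra.
    have [a [b [c' [hb [hK [hL _]]]]]] := hall 1%N x 0 0 hobs.
    exists a; split; first exact: hK.
    have hb' := (psdC_char (E3 b)).1 hb (const_mx 1) 0.
    rewrite !form0m !form0l !form0r form11 in hb'.
    move: hL; rewrite /chan_L add0r => /(congr1 (fun M : 'M[R]_1 => M ord0 ord0)).
    rewrite addE -/(form B x x) -/(form L0 a a) => ->.
    case: hb' => hb1 _; lra.
  apply/(psdC_char (E1 B (A^T *m Omega R N *m A))) => x y.
  rewrite !formN !form_conj.
  have [a [ha1 ha2]] := key x; have [a' [hb1 hb2]] := key y.
  have [h1 _] := hG' a a'.
  rewrite !formN !form_conj -ha1 -hb1 in h1.
  have [_ e1] := hch' x y; have [_ e2] := hch' y x.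
  have := hO _ (A *m x); have := hO _ (A *m y).
  split; lra.
move=> hD; exists (2 * N')%N, A, B, c; split; first exact: hD.
move=> M K L m hobs; exists K, L, m; split; last by [].
have h := (psdC_char (E1 L (K^T *m Omega R N' *m K))).1 hobs.
apply/(psdC_char (E3 L)) => x y; rewrite !form0m.
have [h1 e1] := h x y; have [h2 e2] := h x (- y).
rewrite !formNl !formNr opprK !formN in h2 e2.
rewrite !formN in h1 e1.
split; lra.
Qed.
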